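(* Let $(x^k)$ be generated by the augmented Lagrangian method described below, where each step satisfies the inexactness assumption described below, let $\bar x$ be a limit point of $(x^k)$, and assume that for every $\nu$ the function $h^\nu$ satisfies CPLD$_\nu$ in $\bar x$. Then $\bar x$ is a KKT point of the Feasibility GNEP.
   Context: GNEP: $N$ players, variables $x=(x^1,\ldots,x^N)\in\mathbb{R}^n$, $x^\nu\in\mathbb{R}^{n_\nu}$. Player $\nu$ solves $\min_{x^\nu}\theta_\nu(x)$ s.t. $g^\nu(x)\le0$, $h^\nu(x)\le0$, with continuously differentiable $\theta_\nu:\mathbb{R}^n\to\mathbb{R}$, $g^\nu:\mathbb{R}^n\to\mathbb{R}^{m_\nu}$, $h^\nu:\mathbb{R}^n\to\mathbb{R}^{p_\nu}$ ($p_\nu=0$ allowed); $m=\sum m_\nu$, $p=\sum p_\nu$. Notation: $v_+=\max\{0,v\}$ componentwise, $g^\nu_+(x)=(g^\nu(x))_+$; $\nabla f$ = transposed Jacobian, $\nabla_{x^\nu}f$ its rows for $x^\nu$; $\min$ of vectors componentwise; Euclidean norms. Vectors in $\mathbb{R}^m$ (resp. $\mathbb{R}^p$) are split into player blocks $\lambda^{\nu}\in\mathbb{R}^{m_\nu}$ (resp. $\mu^\nu\in\mathbb{R}^{p_\nu}$). Augmented Lagrangian of player $\nu$: $L_a^\nu(x,u;\rho)=\theta_\nu(x)+\frac{\rho}{2}\|(g^\nu(x)+u/\rho)_+\|^2$. Method: choose $x^0\in\mathbb{R}^n,\lambda^0\in\mathbb{R}^m,\mu^0\in\mathbb{R}^p$,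 an initial $u^0\in\mathbb{R}^m$, $u^{\max}\ge0$, and for each $\nu$: $\tau_\nu\in(0,1)$, $\gamma_\nu>1$, $\rho_{\nu,0}>0$. For $k=0,1,2,\dots$ (the method is assumed to run forever): (1) compute $(x^{k+1},\mu^{k+1})\in\mathbb{R}^{n+p}$ satisfying the inexactness assumption; (2) $\lambda^{\nu,k+1}=(u^{\nu,k}+\rho_{\nu,k}g^\nu(x^{k+1}))_+$; (3) for each $\nu$: if $\|\min\{-g^\nu(x^{k+1}),\lambda^{\nu,k+1}\}\|\le\tau_\nu\|\min\{-g^\nu(x^k),\lambda^{\nu,k}\}\|$ then $\rho_{\nu,k+1}=\rho_{\nu,k}$, else $\rho_{\nu,k+1}=\gamma_\nu\rho_{\nu,k}$; (4) $u^{k+1}=\min\{\lambda^{k+1},u^{\max}\}$ componentwise. Inexactness assumption: for all $k,\nu$, $\|\nabla_{x^\nu}L_a^\nu(x^{k+1},u^{\nu,k};\rho_{\nu,k})+\nabla_{x^\nu}h^\nu(x^{k+1})\mu^{\nu,k+1}\|\le\varepsilon_k$ and $\|\min\{-h^\nu(x^{k+1}),\mu^{\nu,k+1}\}\|\le\varepsilon_k'$, with $(\varepsilon_k)\subset[0,\infty)$ bounded and $\varepsilon'_k\to0$. Feasibility GNEP: player $\nu$ solves $\min_{x^\nu}\|g^\nu_+(x)\|^2$ s.t. $h^\nu(x)\le0$. A point $\bar x$ is a KKT point of it if for every $\nu$ there is $w^\nu\in\mathbb{R}^{p_\nu}$ with $\nabla_{x^\nu}\|g^\nu_+(\bar x)\|^2+\nabla_{x^\nu}h^\nu(\bar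 x)w^\nu=0$ and $\min\{-h^\nu(\bar x),w^\nu\}=0$. CPLD$_\nu$ for $h^\nu$ at $x$ with $h^\nu(x)\le0$: whenever $\nabla_{x^\nu}h_j^\nu(x)$, $j\in J$, are positively linearly dependent (a nontrivial nonnegative combination vanishes) for some $J\subset\{j:h_j^\nu(x)=0\}$, the vectors $\nabla_{x^\nu}h_j^\nu(y)$, $j\in J$, are linearly dependent for all $y$ in a neighbourhood of $x$. *)

(* Defs.v *)
From HB Require Import structures.
From mathcomp Require Import all_boot all_order all_algebra.
From mathcomp Require Import all_classical all_reals all_analysis.
Set Implicit Arguments. Unset Strict Implicit. Unset Printing Implicit Defensive.
Import Order.TTheory GRing.Theory Num.Theory.
Import numFieldNormedType.Exports.
Local Open Scope ring_scope.
Local Open Scope classical_set_scope.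

Section GNEPDefs.
Variable R : realType.
Variable n : nat.

Notation vec := 'rV[R]_n.

Definition pd (f : vec -> R) (x : vec) (i : 'I_n) : R :=
  'd f x (delta_mx 0 i).

Definition C1 (f : vec -> R) : Prop :=
  (forall x, differentiable f x) /\ (forall i, continuous (fun x => pd f x i)).

Definition enorm (I : finType) (v : I -> R) : R :=
  Num.sqrt (\sum_(j : I) v j ^+ 2).

(* player blocks: coordinate i of x belongs to player blk i;
   x^nu = (x_i)_{blk i = nu}.  Euclidean norm of the nu-block of a vector F. *)
Variable N : nat.
Variable blk : 'I_n -> 'I_N.

Definition bnorm (nu : 'I_N) (F : 'I_n -> R) : R :=
  Num.sqrt (\sum_(i | blk i == nu) F i ^+ 2).

Definition sqplus (m : nat) (g : 'I_m -> vec -> R) (x : vec) : R :=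
  \sum_(j < m) (Num.max 0 (g j x)) ^+ 2.

Definition La (m : nat) (theta : vec -> R) (g : 'I_m -> vec -> R)
  (u : 'I_m -> R) (rho : R) (x : vec) : R :=
  theta x + rho / 2 * \sum_(j < m) (Num.max 0 (g j x + u j / rho)) ^+ 2.

Definition CPLD (nu : 'I_N) (p : nat) (h : 'I_p -> vec -> R) (x : vec) : Prop :=
  forall J : {set 'I_p},
    (forall j, j \in J -> h j x = 0) ->
    (exists a : 'I_p -> R,
        (forall j, j \notin J -> a j = 0) /\
        (forall j, 0 <= a j) /\ (exists j, a j != 0) /\
        (forall i, blk i = nu -> \sum_(j < p) a j * pd (h j) x i = 0)) ->
    \forall y \near x,
      exists a : 'I_p -> R,
        (forall j, j \notin J -> a j = 0) /\ (exists j, a j != 0) /\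
        (forall i, blk i = nu -> \sum_(j < p) a j * pd (h j) y i = 0).

End GNEPDefs.

(* Main.v *)
Require Import Defs.
From HB Require Import structures.
From mathcomp Require Import all_boot all_order all_algebra.
From mathcomp Require Import all_classical all_reals all_analysis.
From mathcomp Require Import ring lra.
Import Order.TTheory GRing.Theory Num.Theory.
Import numFieldNormedType.Exports.
Local Open Scope ring_scope.
Local Open Scope classical_set_scope.

Set Implicit Arguments. Unset Strict Implicit. Unset Printing Implicit Defensive.

Section Lim.
Variable R : realType.

Lemma cvg_sumR (T : Type) (F : set_system T) (FF : Filter F) m
  (f : 'I_m -> T -> R) (a : 'I_m -> R) :
  (forall j, f j @ F --> a j) -> (fun x => \sum_(j < m) f j x) @ F --> \sum_(j < m) a j.
Proof.
elim: m f a => [|m IH] f a H.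
  rewrite big_ord0; under eq_fun do rewrite big_ord0; exact: cvg_cst.
rewrite big_ord_recr; under eq_fun do rewrite big_ord_recr.
apply: cvgD; last exact: H.
exact: (IH (fun j => f (widen_ord (leqnSn m) j)) (fun j => a (widen_ord (leqnSn m) j))).
Qed.

Lemma ultra_fmap (T U : Type) (F : set_system T) (f : T -> U) :
  UltraFilter F -> UltraFilter (f @ F).
Proof.
move=> FU; split; first exact: fmap_proper_filter.
move=> G GF sFG; rewrite predeqE => A; split; last exact: sFG.
move=> GA; have [//|FnA] := in_ultra_setVsetC (f @^-1` A) FU.
have GnA : G (~` A) by apply: sFG.
by have [? []] := @filter_ex _ G GF _ (filterI GA GnA).
Qed.

Lemma ultra_bounded_cvg (T : Type) (F : set_system T) (FU : UltraFilter F)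
  (f : T -> R) (M : R) :
  F (fun k => `|f k| <= M) -> exists l : R, f @ F --> l.
Proof.
move=> Hb.
have cpt : compact `[- M, M] := @segment_compact R (- M) M.
have FA : (f @ F) `[- M, M].
  apply: (filterS _ Hb) => k Hk /=. rewrite in_itv /= -ler_norml. exact: Hk.
have UF := ultra_fmap f FU.
move: cpt; rewrite compact_ultra => /(_ _ UF FA) [l [_ Hl]].
by exists l.
Qed.

Lemma ultra_union (T : Type) (F : set_system T) (FU : UltraFilter F)
  (I : finType) (A : I -> set T) :
  F (fun k => exists i, A i k) -> exists i, F (A i).
Proof.
move=> H; apply: contrapT => /forallNP nA.
have H2 : forall i, F (~` A i).
  by move=> i; have [|] := in_ultra_setVsetC (A i) FU => // /nA.
have H3 : F (fun k => forall i, ~ A i k) by apply: filter_forall.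
have [k [[i Ai] /(_ i)]] := @filter_ex _ F _ _ (filterI H H3); exact.
Qed.

Lemma lim_uniq (T : Type) (F : set_system T) (FF : ProperFilter F) (f : T -> R) (a b : R) :
  f @ F --> a -> f @ F --> b -> a = b.
Proof. move=> Ha Hb; rewrite -(cvg_lim _ Ha); last exact: norm_hausdorff. by apply: cvg_lim => //; exact: norm_hausdorff. Qed.

Lemma cvg0_le (T : Type) (F : set_system T) (FF : Filter F) (f e : T -> R) :
  F (fun k => `|f k| <= e k) -> e @ F --> 0 -> f @ F --> 0.
Proof.
move=> Hb He.
apply: (@squeeze_cvgr _ _ _ _ (fun k => - e k) e).
  by apply: (filterS _ Hb) => k; rewrite ler_norml.
  by rewrite -oppr0; apply: cvgN.
done.
Qed.

Lemma lim_ge (T : Type) (F : set_system T) (FF : ProperFilter F) (f : T -> R) (l c : R) :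
  F (fun k => c <= f k) -> f @ F --> l -> c <= l.
Proof.
move=> Hb Hl; apply: contrapT => /negP; rewrite -ltNge => lc.
have e0 : 0 < c - l by rewrite subr_gt0.
have Hd : F (fun k => `|l - f k| < c - l) by exact: cvgr_dist_lt.
have [k [H1 H2]] := @filter_ex _ F _ _ (filterI Hb Hd).
move: H2; rewrite ltr_distlC => /andP [_]; rewrite addrC subrK => /lt_le_trans /(_ H1).
by rewrite ltxx.
Qed.

End Lim.

Section Q.
Variable R : realType.

Definition qq (t : R) := (Num.max 0 t) ^+ 2.

Lemma qq_ineq (t h : R) :
  `|qq (h + t) - qq t - h * (2 * Num.max 0 t)| <= 2 * h ^+ 2.
Proof.
rewrite /qq ler_norml.
have [t0|t0] := leP 0 t; have [th|th] := leP 0 (h + t).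
- apply/andP; split; nra.
- apply/andP; split; nra.
- apply/andP; split; nra.
- apply/andP; split; nra.
Qed.

Lemma qq_cvg (t : R) :
  (fun h : R => h^-1 *: ((qq \o shift t) (h *: 1) - qq t)) @ 0^' --> 2 * Num.max 0 t.
Proof.
apply/subr_cvg0.
apply: (@cvg0_le _ _ _ _ _ (fun h : R => 2 * `|h|)); last first.
  rewrite -[X in _ --> X](mulr0 (2:R)); apply: cvgMr.
  have : (fun h : R => `|h|) @ 0^' --> `|0 : R|.
    apply: cvg_norm; exact: cvg_within.
  by rewrite normr0.
near=> h.
have h0 : h != 0 by near: h; exact: nbhs_dnbhs_neq.
rewrite /= /shift /= [h *: 1]mulr1.
have -> : h^-1 * (qq (h + t) - qq t) - 2 * Num.max 0 t
   = h^-1 * (qq (h + t) - qq t - h * (2 * Num.max 0 t)).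
  by field.
rewrite normrM normrV ?unitfE // ler_pdivrMl ?normr_gt0 //.
apply: le_trans (qq_ineq t h) _.
rewrite -real_normK ?num_real //; nra.
Unshelve. all: by end_near. Qed.

End Q.

Section D.
Variable R : realType.
Variable n : nat.
Notation vec := 'rV[R]_n.

Lemma qq_derivable (t : R) : derivable (@qq R) t 1.
Proof. apply: (cvgP (2 * Num.max 0 t)). exact: qq_cvg. Qed.

Lemma qq_derive1 (t : R) : derive1 (@qq R) t = 2 * Num.max 0 t.
Proof.
rewrite derive1E /derive; apply: cvg_lim; first exact: norm_hausdorff.
exact: qq_cvg.
Qed.

Lemma qq_diff (t : R) : differentiable (@qq R) t.
Proof. by apply/derivable1_diffP; exact: qq_derivable. Qed.

Lemma diff_qq_comp (G : vec -> R) (y v : vec) : differentiable G y ->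
  differentiable (@qq R \o G) y /\ 'd (@qq R \o G) y v = 'd G y v * (2 * Num.max 0 (G y)).
Proof.
move=> dG; split; first by apply: differentiable_comp => //; exact: qq_diff.
rewrite diff_comp //; last exact: qq_diff.
rewrite /= deriv1E ?qq_derivable //=.
have E := qq_derive1 (G y).
exact: (congr1 (fun z => 'd G y v * z) E).
exact: qq_derivable.
Qed.

Lemma diff_sumqq m (G : 'I_m -> vec -> R) (y v : vec) :
  (forall j, differentiable (G j) y) ->
  differentiable (fun x => \sum_(j < m) @qq R (G j x)) y /\
  'd (fun x => \sum_(j < m) @qq R (G j x)) y v
    = \sum_(j < m) 'd (G j) y v * (2 * Num.max 0 (G j y)).
Proof.
elim: m G => [|m IH] G dG.
  have -> : (fun x => \sum_(j < 0) @qq R (G j x)) = cst 0.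
    by apply/funext => x; rewrite big_ord0.
  by rewrite big_ord0 diff_cst; split.
have [d1 e1] := IH (fun j => G (widen_ord (leqnSn m) j)) (fun j => dG _).
have [d2 e2] := diff_qq_comp v (dG ord_max).
have -> : (fun x => \sum_(j < m.+1) @qq R (G j x)) =
  (fun x => \sum_(j < m) @qq R (G (widen_ord (leqnSn m) j) x)) + (@qq R \o G ord_max).
  by apply/funext => x; rewrite big_ord_recr.
split; first exact: differentiableD.
rewrite diffD // big_ord_recr /=.
by rewrite e1 e2.
Qed.

End D.

Section D2.
Variable R : realType.
Variable n : nat.
Notation vec := 'rV[R]_n.

Lemma pd_sqplus m (g : 'I_m -> vec -> R) (y : vec) i :
  (forall j, differentiable (g j) y) ->
  pd (sqplus g) y i = \sum_(j < m) 2 * Num.max 0 (g j y) * pd (g j) y i.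
Proof.
move=> dg.
have -> : sqplus g = (fun x => \sum_(j < m) @qq R (g j x)) by [].
rewrite /pd; have [_ ->] := diff_sumqq (delta_mx 0 i) dg.
by apply: eq_bigr => j _; rewrite mulrC.
Qed.

Lemma pd_La m (theta : vec -> R) (g : 'I_m -> vec -> R) (u : 'I_m -> R) (rho : R)
  (y : vec) i :
  differentiable theta y -> (forall j, differentiable (g j) y) ->
  pd (La theta g u rho) y i =
  pd theta y i + rho * \sum_(j < m) Num.max 0 (g j y + u j / rho) * pd (g j) y i.
Proof.
move=> dth dg.
pose G := fun j x => g j x + u j / rho.
have dG : forall j, differentiable (G j) y.
  move=> j; have -> : G j = g j + cst (u j / rho) by [].
  by apply: differentiableD.
have eG : forall j v, 'd (G j) y v = 'd (g j) y v.
  move=> j v; have -> : G j = g j + cst (u j / rho) by [].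
  by rewrite diffD // diff_cst /= addr0.
have [dS eS] := diff_sumqq (delta_mx 0 i) dG.
have -> : La theta g u rho =
  theta + (rho / 2) *: (fun x => \sum_(j < m) @qq R (G j x)) by [].
rewrite /pd diffD //; last exact: differentiableZ.
rewrite diffZ //= eS /=.
congr (_ + _).
rewrite -[_ *: _]/(_ * _) !mulr_sumr; apply: eq_bigr => j _.
rewrite eG /G; field. all: by [].
Qed.

End D2.

Section Norms.
Variable R : realType.

Lemma comp_le_enorm (I : finType) (v : I -> R) j : `|v j| <= enorm v.
Proof.
rewrite /enorm -sqrtr_sqr; apply: ler_wsqrtr.
rewrite (bigD1 j) //= lerDl; apply: sumr_ge0 => k _; exact: sqr_ge0.
Qed.

Lemma comp_le_bnorm n N (blk : 'I_n -> 'I_N) nu (F : 'I_n -> R) i :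
  blk i = nu -> `|F i| <= bnorm blk nu F.
Proof.
move=> Hi; rewrite /bnorm -sqrtr_sqr; apply: ler_wsqrtr.
rewrite (bigD1 i) /= ?Hi ?eqxx // lerDl; apply: sumr_ge0 => k _; exact: sqr_ge0.
Qed.

Lemma reduce_pos (I : finType) (b g : I -> R) j1 :
  (forall j, 0 <= b j) -> 0 < g j1 ->
  exists j0, 0 < g j0 /\ exists t, (forall j, 0 <= b j - t * g j) /\ b j0 - t * g j0 = 0.
Proof.
move=> b0 g1.
case: (@arg_minP _ R I j1 (fun j => 0 < g j) (fun j => b j / g j) g1) => j0 Pj0 Hmin.
exists j0; split => //; exists (b j0 / g j0); split; last first.
  by rewrite divfK ?subrr // gt_eqF.
have t0 : 0 <= b j0 / g j0 by rewrite divr_ge0 // ltW.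
move=> j; have [gj|gj] := ltP 0 (g j).
  have := Hmin j gj; set t := b j0 / g j0 => Ht.
  have -> : b j - t * g j = g j * (b j / g j - t).
    by field; rewrite gt_eqF.
  by apply: mulr_ge0; [exact: ltW | rewrite subr_ge0].
by move: t0 (b0 j) gj; set t := b j0 / g j0 => t0 bj gj; nra.
Qed.

Lemma reduce (I : finType) (b g : I -> R) :
  (forall j, 0 <= b j) -> (exists j, g j != 0) ->
  exists j0, g j0 != 0 /\ exists t, (forall j, 0 <= b j - t * g j) /\ b j0 - t * g j0 = 0.
Proof.
move=> b0 [j1 gj1].
have [[j2 gj2]|] := pselect (exists j, 0 < g j).
  have [j0 [g0 [t [H1 H2]]]] := reduce_pos b0 gj2.
  by exists j0; split; [rewrite gt_eqF|exists t].
move=> /forallNP Hn.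
have gn : 0 < - g j1.
  by rewrite oppr_gt0 lt_neqAle gj1 /=; rewrite leNgt; apply/negP => /Hn.
have [j0 [g0 [t [H1 H2]]]] := reduce_pos (g := fun j => - g j) b0 gn.
exists j0; split; first by rewrite -oppr_eq0 gt_eqF.
by exists (- t); split => [j|]; [move: (H1 j)|move: H2] => /=; rewrite mulrN mulNr.
Qed.

End Norms.

Unset Implicit Arguments.

Section Lim2.
Variable R : realType.

Lemma cvg_eqU (T : Type) (F : set_system T) (FF : Filter F) (f g : T -> R) (l : R) :
  F (fun k => f k = g k) -> g @ F --> l -> f @ F --> l.
Proof.
move=> E Hg; apply: cvg_trans Hg; apply: near_eq_cvg.
by apply: filterS E => k ->.
Qed.

Lemma inv_cvg0 (T : Type) (F : set_system T) (FF : Filter F) (s : T -> R) :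
  (forall M, F (fun k => M < s k)) -> (fun k => (s k)^-1) @ F --> 0.
Proof.
move=> Hs; apply/cvgr0Pnorm_le => e e0.
apply: filterS (Hs e^-1) => k Hk.
have s0 : 0 < s k by apply: lt_trans Hk; rewrite invr_gt0.
rewrite normfV ger0_norm ?ltW //.
by rewrite -(invrK e) ltf_pV2 // posrE ?invr_gt0.
Qed.

End Lim2.

Section Cone.
Variables (R : realType) (n N : nat) (blk : 'I_n -> 'I_N) (nu : 'I_N) (p : nat)
  (h : 'I_p -> 'rV[R]_n -> R) (xbar : 'rV[R]_n).
Hypothesis HC : CPLD blk nu h xbar.
Hypothesis hcont : forall j i, continuous (fun x => pd (h j) x i).
Variable U : set_system nat.
Hypothesis UU : UltraFilter U.
Variable y : nat -> 'rV[R]_n.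
Hypothesis Hy : y @ U --> xbar.

Lemma Dcvg j i : (fun k => pd (h j) (y k) i) @ U --> pd (h j) xbar i.
Proof.
have := @cvg_comp _ _ _ y (fun x => pd (h j) x i) U _ _ Hy (@hcont j i xbar).
exact.
Qed.

Lemma sum_cvg (b : nat -> 'I_p -> R) (w : 'I_p -> R) i :
  (forall j, (fun k => b k j) @ U --> w j) ->
  (fun k => \sum_(j < p) b k j * pd (h j) (y k) i) @ U -->
    \sum_(j < p) w j * pd (h j) xbar i.
Proof.
move=> Hb.
apply: (@cvg_sumR R nat U _ p (fun j k => b k j * pd (h j) (y k) i)) => j.
apply: (@cvgM _ _ _ _ (fun k => b k j) (fun k => pd (h j) (y k) i)).
  exact: Hb.
exact: Dcvg.
Qed.

Lemma vec_lim (b : nat -> 'I_p -> R) (M : R) :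
  U (fun k => forall j, `|b k j| <= M) ->
  exists w : 'I_p -> R, forall j, (fun k => b k j) @ U --> w j.
Proof.
move=> Hb.
have H : forall j, exists l : R, (fun k => b k j) @ U --> l.
  move=> j; apply: (@ultra_bounded_cvg R nat U UU _ M).
  by apply: filterS Hb => k; apply.
by case: (choice H) => w Hw; exists w.
Qed.

Definition Hyps (S : {set 'I_p}) (b : nat -> 'I_p -> R) :=
  U (fun k => (forall j, 0 <= b k j) /\ (forall j, j \notin S -> b k j = 0)).

Definition Concl (S : {set 'I_p}) (d : 'I_n -> R) :=
  exists w : 'I_p -> R, (forall j, 0 <= w j) /\ (forall j, j \notin S -> w j = 0) /\
     (forall i, blk i = nu -> \sum_(j < p) w j * pd (h j) xbar i = d i).

Lemma cone_bounded (S : {set 'I_p}) (b : nat -> 'I_p -> R) (d : 'I_n -> R) (M : R) :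
  U (fun k => forall j, `|b k j| <= M) -> Hyps S b ->
  (forall i, blk i = nu -> (fun k => \sum_(j < p) b k j * pd (h j) (y k) i) @ U --> d i) ->
  Concl S d.
Proof.
move=> HM Hb Hd.
have [w Hw] := vec_lim b M HM.
exists w; split; [|split].
- move=> j; apply: (@lim_ge _ _ U _ (fun k => b k j) (w j) 0 _ (Hw j)).
  by apply: filterS Hb => k [+ _]; apply.
- move=> j jS; apply: (@lim_uniq _ _ U _ _ _ _ (Hw j)).
  apply: (@cvg0_le R nat U _ _ (fun _ => 0)); last exact: cvg_cst.
  by apply: filterS Hb => k [_ /(_ j jS) ->]; rewrite normr0.
- move=> i Hi; exact: (@lim_uniq _ _ U _ _ _ _ (sum_cvg b w i Hw) (Hd i Hi)).
Qed.


Lemma b_le_sum (b : 'I_p -> R) j : (forall j, 0 <= b j) -> b j <= \sum_(l < p) b l.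
Proof.
move=> b0; rewrite (bigD1 j) //= lerDl; apply: sumr_ge0 => l _; exact: b0.
Qed.

Lemma cone_unbounded (S : {set 'I_p}) (b : nat -> 'I_p -> R) (d : 'I_n -> R) :
  (forall j, j \in S -> h j xbar = 0) ->
  Hyps S b ->
  (forall i, blk i = nu -> (fun k => \sum_(j < p) b k j * pd (h j) (y k) i) @ U --> d i) ->
  (forall M, U (fun k => M < \sum_(j < p) b k j)) ->
  exists j0, j0 \in S /\ exists b' : nat -> 'I_p -> R, Hyps (S :\ j0) b' /\
    (forall i, blk i = nu -> (fun k => \sum_(j < p) b' k j * pd (h j) (y k) i) @ U --> d i).
Proof.
move=> hS Hb Hd Hs.
pose s := fun k => \sum_(j < p) b k j.
pose al := fun k j => b k j / s k.
have Hpos : U (fun k => ((forall j, 0 <= b k j) /\ (forall j, j \notin S -> b k j = 0))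
                       /\ 0 < s k).
  exact: filterI Hb (Hs 0).
have Hal : U (fun k => forall j, `|al k j| <= 1).
  apply: filterS Hpos => k [[b0 _] s0] j.
  have H0 : 0 <= al k j by rewrite /al divr_ge0 // ltW.
  rewrite ger0_norm // /al ler_pdivrMr // mul1r; exact: b_le_sum.
have [a Ha] := vec_lim al 1 Hal.
have a0 : forall j, 0 <= a j.
  move=> j; apply: (@lim_ge _ _ U _ (fun k => al k j) (a j) 0 _ (Ha j)).
  by apply: filterS Hpos => k [[b0 _] s0]; rewrite /al divr_ge0 // ltW.
have aS : forall j, j \notin S -> a j = 0.
  move=> j jS; apply: (@lim_uniq _ _ U _ _ _ _ (Ha j)).
  apply: (@cvg0_le R nat U _ _ (fun _ => 0)); last exact: cvg_cst.
  apply: filterS Hpos => k [[_ /(_ j jS) E] _].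
  by rewrite /al E mul0r normr0.
have asum : \sum_(j < p) a j = 1.
  apply: (@lim_uniq _ _ U _ (fun k => \sum_(j < p) al k j)).
    exact: (@cvg_sumR R nat U _ p (fun j k => al k j) a Ha).
  apply: (@cvg_eqU R nat U _ _ (fun _ => 1)); last exact: cvg_cst.
  by apply: filterS Hpos => k [_ s0]; rewrite /al -mulr_suml divff // gt_eqF.
have [ja ja0] : exists j, a j != 0.
  apply: contrapT => /forallNP Hn.
  move: asum; rewrite big1 => [/eqP|j _]; first by rewrite eq_sym oner_eq0.
  by apply/eqP/negPn/negP; apply: Hn.
have aD : forall i, blk i = nu -> \sum_(j < p) a j * pd (h j) xbar i = 0.
  move=> i Hi.
  apply: (@lim_uniq _ _ U _ _ _ _ (sum_cvg al a i Ha)).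
  apply: (@cvg_eqU R nat U _ _
     (fun k => (s k)^-1 * \sum_(j < p) b k j * pd (h j) (y k) i)).
    apply: filterS Hpos => k [_ s0]; rewrite mulr_sumr; apply: eq_bigr => j _.
    by rewrite /al mulrA [(s k)^-1 * _]mulrC.
  have := @cvgM _ _ U _ (fun k => (s k)^-1)
     (fun k => \sum_(j < p) b k j * pd (h j) (y k) i) 0 (d i)
     (@inv_cvg0 R nat U _ s Hs) (Hd i Hi).
  by rewrite mul0r => HH; exact: HH.
have HCk := HC S hS (ex_intro _ a (conj aS (conj a0 (conj (ex_intro _ ja ja0) aD)))).
have Hg : U (fun k => exists g : 'I_p -> R, (forall j, j \notin S -> g j = 0) /\
     (exists j, g j != 0) /\
     (forall i, blk i = nu -> \sum_(j < p) g j * pd (h j) (y k) i = 0)).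
  exact: Hy HCk.
pose Q j0 k := j0 \in S /\ exists b0 : 'I_p -> R,
  ((forall j, 0 <= b0 j) /\ (forall j, j \notin S :\ j0 -> b0 j = 0)) /\
  (forall i, blk i = nu -> \sum_(j < p) b0 j * pd (h j) (y k) i
                          = \sum_(j < p) b k j * pd (h j) (y k) i).
have HQ : U (fun k => exists j0, Q j0 k).
  apply: filterS (filterI Hpos Hg) => k [[[b0 bS] _] [g [gS [gnz gD]]]].
  have [j0 [gj0 [t [H1 H2]]]] := reduce b0 gnz.
  have j0S : j0 \in S.
    case: (boolP (j0 \in S)) => // /gS gz; by rewrite gz eqxx in gj0.
  exists j0; split => //; exists (fun j => b k j - t * g j); split; [split|].
  - exact: H1.
  - move=> j; rewrite in_setD1 negb_and negbK => /orP [/eqP -> //|jS].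
    by rewrite (bS j jS) (gS j jS) mulr0 subr0.
  - move=> i Hi; have E := gD i Hi.
    rewrite (eq_bigr (fun j => b k j * pd (h j) (y k) i - t * (g j * pd (h j) (y k) i)));
      last by move=> j _; rewrite mulrBl mulrA.
    by rewrite sumrB -mulr_sumr E mulr0 subr0.
have [j0 Hj0] := ultra_union UU HQ.
have [k0 [j0S _]] := @filter_ex _ U _ _ Hj0.
exists j0; split => //.
pose P k (b0 : 'I_p -> R) :=
  ((forall j, 0 <= b0 j) /\ (forall j, j \notin S :\ j0 -> b0 j = 0)) /\
  (forall i, blk i = nu -> \sum_(j < p) b0 j * pd (h j) (y k) i
                          = \sum_(j < p) b k j * pd (h j) (y k) i).
pose b' k := match pselect (exists b0, P k b0) with
             | left H => proj1_sig (cid H) | right _ => fun _ => 0 end.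
have Hb' : U (fun k => P k (b' k)).
  apply: filterS Hj0 => k [_ Hex]; rewrite /b'; case: pselect => [H|//].
  exact: (proj2_sig (cid H)).
exists b'; split.
  by apply: filterS Hb' => k [].
move=> i Hi.
apply: (@cvg_eqU R nat U _ _ (fun k => \sum_(j < p) b k j * pd (h j) (y k) i)).
  by apply: filterS Hb' => k [_ /(_ i Hi)].
exact: Hd.
Qed.

Lemma cone m : forall (S : {set 'I_p}) (b : nat -> 'I_p -> R) (d : 'I_n -> R),
  (#|S| <= m)%N -> (forall j, j \in S -> h j xbar = 0) -> Hyps S b ->
  (forall i, blk i = nu -> (fun k => \sum_(j < p) b k j * pd (h j) (y k) i) @ U --> d i) ->
  Concl S d.
Proof.
elim: m => [|m IH] S b d cS hS Hb Hd.
all: have [[M HM]|HnM] := pselect (exists M, U (fun k => \sum_(j < p) b k j <= M)).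
all: try (apply: (cone_bounded S b d M) => //;
  apply: filterS (filterI Hb HM) => k [[b0 _] sM] j;
  rewrite ger0_norm //; exact: le_trans (b_le_sum (b k) j b0) sM).
all: have Hs : forall M, U (fun k => M < \sum_(j < p) b k j)
  by move=> M; have [HU|HU] := in_ultra_setVsetC (fun k => \sum_(j < p) b k j <= M) UU;
     [exfalso; apply: HnM; exists M|apply: filterS HU => k /negP; rewrite -ltNge].
all: have [j0 [j0S [b' [Hb' Hd']]]] := cone_unbounded S b d hS Hb Hd Hs.
  by move: cS j0S; rewrite leqn0 => /eqP/cards0_eq ->; rewrite inE.
have cS' : (#|S :\ j0| <= m)%N.
  by move: cS; rewrite (cardsD1 j0 S) j0S add1n ltnS.
have hS' : forall j, j \in S :\ j0 -> h j xbar = 0.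
  by move=> j; rewrite in_setD1 => /andP [_]; exact: hS.
have [w [w0 [wS wD]]] := IH (S :\ j0) b' d cS' hS' Hb' Hd'.
exists w; split => //; split => // j jS; apply: wS.
by rewrite in_setD1 (negbTE jS) andbF.
Qed.

End Cone.

Section H.
Variable R : realType.

Lemma near_oo_P (P : nat -> Prop) :
  (\forall k \near \oo, P k) -> exists N, forall k, (N <= k)%N -> P k.
Proof. move=> [N _ HN]; exists N => k Hk; exact: HN. Qed.

Lemma P_near_oo (P : nat -> Prop) :
  (exists N, forall k, (N <= k)%N -> P k) -> \forall k \near \oo, P k.
Proof. by move=> [N HN]; exists N. Qed.

Lemma lim_nonneg_of_min (T : Type) (F : set_system T) (FF : ProperFilter F)
  (a c e : T -> R) (l : R) :
  a @ F --> l -> e @ F --> 0 ->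
  F (fun k => `|Num.min (a k) (c k)| <= e k) -> 0 <= l.
Proof.
move=> Ha He Hb; apply: contrapT => /negP; rewrite -ltNge => l0.
have d0 : 0 < - l / 2 by rewrite divr_gt0 // oppr_gt0.
have H1 : F (fun k => `|l - a k| < - l / 2) by exact: cvgr_dist_lt.
have H2 : F (fun k => `|0 - e k| < - l / 2) by exact: cvgr_dist_lt.
have [k [[Hk1 Hk2] Hk3]] := @filter_ex _ F _ _ (filterI (filterI H1 H2) Hb).
move: Hk1 Hk2 Hk3; rewrite sub0r normrN.
have Hm : Num.min (a k) (c k) <= a k by rewrite ge_min lexx.
have Hn := ler_norm (- Num.min (a k) (c k)); rewrite normrN in Hn.
move=> Hk1 Hk2 Hk3.
have Hk1' := ler_norm (a k - l); rewrite distrC in Hk1'.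
have Hk2' := ler_norm (e k).
lra.
Qed.

Lemma cvg_max0 (T : Type) (F : set_system T) (FF : Filter F) (z : T -> R) (l : R) :
  z @ F --> l -> (fun k => Num.max 0 (z k)) @ F --> Num.max 0 l.
Proof.
move=> Hz; apply/subr_cvg0.
apply: (@cvg0_le R T F FF _ (fun k => `|z k - l|)).
  apply: filterE => k.
  have H1 := ler_norm (z k - l); have H2 := ler_norm (l - z k).
  rewrite distrC in H2.
  have [a0|a0] := leP 0 (z k); have [b0|b0] := leP 0 l;
    rewrite ler_norml; apply/andP; split; lra.
have := Hz; move/subr_cvg0 => H0.
have := @cvg_norm _ _ _ F FF _ 0 H0; rewrite normr0.
by move=> HH; exact: HH.
Qed.

Lemma pow_unbounded (gam c M : R) : 1 < gam -> 0 < c -> exists m : nat, M < gam ^+ m * c.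
Proof.
move=> g1 c0.
have bern : forall m : nat, 1 + m%:R * (gam - 1) <= gam ^+ m.
  elim=> [|m IH]; first by rewrite mul0r addr0 expr0.
  rewrite exprS -natr1.
  have : 0 <= m%:R * (gam - 1) ^+ 2 :> R by rewrite mulr_ge0 // sqr_ge0.
  nra.
pose x := Num.max 0 (M / (c * (gam - 1))).
have x0 : 0 <= x by rewrite /x le_max lexx.
have := archi_boundP x0; set m := Num.Def.archi_bound x => Hm.
exists m.
have Hx : M / (c * (gam - 1)) <= x by rewrite /x le_max lexx orbT.
have cg : 0 < c * (gam - 1) by rewrite mulr_gt0 // subr_gt0.
have HM : M <= x * (c * (gam - 1)) by rewrite -ler_pdivrMr.
have := bern m.
nra.
Qed.

End H.

Section Main.
Variables (R : realType) (n N : nat) (blk : 'I_n -> 'I_N) (nu : 'I_N) (m p : nat)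
  (th : 'rV[R]_n -> R) (gg : 'I_m -> 'rV[R]_n -> R) (hh : 'I_p -> 'rV[R]_n -> R).
Hypotheses (Hth : C1 th) (Hgg : forall j, C1 (gg j)) (Hhh : forall j, C1 (hh j)).
Variables (tau gam : R) (umax : 'I_m -> R).
Hypotheses (Htau : 0 < tau < 1) (Hgam : 1 < gam) (Humax : forall j, 0 <= umax j).
Variables (x : nat -> 'rV[R]_n) (lam u : nat -> 'I_m -> R) (mu : nat -> 'I_p -> R)
  (rho : nat -> R).
Hypothesis Hrho0 : 0 < rho 0.
Variables (eps eps' : nat -> R) (B : R).
Hypotheses (HB : forall k, eps k <= B) (Heps' : eps' @ \oo --> (0 : R)).
Hypothesis Hgrad : forall k i, blk i = nu ->
  `|pd (La th gg (u k) (rho k)) (x k.+1) i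
    + \sum_(j < p) mu k.+1 j * pd (hh j) (x k.+1) i| <= eps k.
Hypothesis Hcompl' : forall k,
  enorm (fun j : 'I_p => Num.min (- hh j (x k.+1)) (mu k.+1 j)) <= eps' k.
Hypothesis Hlam : forall k j, lam k.+1 j = Num.max 0 (u k j + rho k * gg j (x k.+1)).
Hypothesis Hrho : forall k, rho k.+1 =
  if enorm (fun j : 'I_m => Num.min (- gg j (x k.+1)) (lam k.+1 j))
     <= tau * enorm (fun j : 'I_m => Num.min (- gg j (x k)) (lam k j))
  then rho k else gam * rho k.
Hypothesis Hu : forall k j, u k.+1 j = Num.min (lam k.+1 j) (umax j).
Variable xbar : 'rV[R]_n.
Variable U : set_system nat.
Hypothesis UU : UltraFilter U.
Hypothesis Hoo : forall P : nat -> Prop, (\forall k \near \oo, P k) -> U P.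
Hypothesis Hy : (fun k => x k.+1) @ U --> xbar.
Hypothesis HCPLD : CPLD blk nu hh xbar.

Lemma UF : Filter U.
Proof. typeclasses eauto. Qed.

Definition EE k := enorm (fun j : 'I_m => Num.min (- gg j (x k)) (lam k j)).

Lemma rpos k : 0 < rho k.
Proof.
elim: k => // k IH; rewrite Hrho; case: ifP => // _.
by rewrite mulr_gt0 // (lt_trans _ Hgam).
Qed.

Lemma rmono k : rho k <= rho k.+1.
Proof.
rewrite Hrho; case: ifP => // _.
by move: (rpos k) Hgam => r0 g1; nra.
Qed.

Lemma rmono' k l : (k <= l)%N -> rho k <= rho l.
Proof.
move/subnK <-; elim: (l - k)%N => [|d IH]; first by rewrite add0n.
by apply: le_trans IH _; rewrite addSn; exact: rmono.
Qed.

Lemma Hcompl k j : `|Num.min (- hh j (x k.+1)) (mu k.+1 j)| <= eps' k.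
Proof. exact: le_trans (comp_le_enorm _ j) (Hcompl' k). Qed.

Lemma eps'0 k : 0 <= eps' k.
Proof. by apply: le_trans (Hcompl' k); rewrite /enorm sqrtr_ge0. Qed.

Lemma lam0 k j : 0 <= lam k.+1 j.
Proof. by rewrite Hlam le_max lexx. Qed.

Lemma ubnd k j : `|u k.+1 j| <= umax j.
Proof.
rewrite Hu; have h1 := lam0 k j; have h2 := Humax j.
by case: (leP (lam k.+1 j) (umax j)) => H; rewrite ger0_norm.
Qed.

Lemma ooU (f : nat -> R) (l : R) : f @ \oo --> l -> f @ U --> l.
Proof. by move=> Hf A HA; apply: Hoo; exact: Hf. Qed.

Lemma contU (f : 'rV[R]_n -> R) : continuous f ->
  (fun k => f (x k.+1)) @ U --> f xbar.
Proof.
move=> cf.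
exact: (@cvg_comp _ _ _ (fun k => x k.+1) f U _ _ Hy (cf xbar)).
Qed.

Lemma cont_of_C1 (f : 'rV[R]_n -> R) : C1 f -> continuous f.
Proof. by move=> [df _] z; apply: differentiable_continuous. Qed.

Lemma cvgN' (F : set_system nat) (FF : Filter F) (f : nat -> R) (a : R) :
  f @ F --> a -> (fun k => - f k) @ F --> - a.
Proof. move=> Hf; exact: (@cvgN _ _ _ F FF f a Hf). Qed.

Lemma hle0 j : hh j xbar <= 0.
Proof.
rewrite -oppr_ge0.
apply: (@lim_nonneg_of_min R nat U _ (fun k => - hh j (x k.+1)) (fun k => mu k.+1 j) eps').
- have HC1 := contU (hh j) (cont_of_C1 (hh j) (Hhh j)).
  have HC2 := cvgN' U _ _ _ HC1.
  exact: HC2.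
- exact: ooU.
- apply: filterE => k; exact: Hcompl.
Qed.


Lemma cvgD' (F : set_system nat) (FF : Filter F) (f g : nat -> R) (a b : R) :
  f @ F --> a -> g @ F --> b -> (fun k => f k + g k) @ F --> a + b.
Proof. move=> Hf Hg; exact: (@cvgD _ _ _ F FF f g a b Hf Hg). Qed.

Lemma cvgB' (F : set_system nat) (FF : Filter F) (f g : nat -> R) (a b : R) :
  f @ F --> a -> g @ F --> b -> (fun k => f k - g k) @ F --> a - b.
Proof. move=> Hf Hg; exact: (@cvgB _ _ _ F FF f g a b Hf Hg). Qed.

Lemma cvgM' (F : set_system nat) (FF : Filter F) (f g : nat -> R) (a b : R) :
  f @ F --> a -> g @ F --> b -> (fun k => f k * g k) @ F --> a * b.
Proof. move=> Hf Hg; exact: (@cvgM _ _ F FF f g a b Hf Hg). Qed.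

Lemma cvg_lim_eq (F : set_system nat) (f : nat -> R) (a b : R) :
  f @ F --> a -> a = b -> f @ F --> b.
Proof. by move=> H <-. Qed.

Lemma EE0 k : 0 <= EE k.
Proof. by rewrite /EE /enorm sqrtr_ge0. Qed.

Lemma caseA_cvg : (exists K, forall k, (K <= k)%N -> EE k.+1 <= tau * EE k) ->
  (fun k => EE k.+1) @ U --> 0.
Proof.
move=> [K HK].
have t0 : 0 <= tau by case/andP: Htau => /ltW.
have t1 : `|tau| < 1 by rewrite ger0_norm //; case/andP: Htau.
have Hgeo : forall j, EE (K + j) <= tau ^+ j * EE K.
  elim=> [|j IH]; first by rewrite addn0 expr0 mul1r.
  rewrite addnS; apply: le_trans (HK _ (leq_addr _ _)) _.
  by rewrite exprS -mulrA; apply: ler_wpM2l.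
have Ht : (fun j => tau ^+ j * EE K) @ \oo --> 0.
  have := @cvgM _ _ \oo _ (fun j => tau ^+ j) (fun _ => EE K) 0 (EE K)
     (cvg_expr t1) (cvg_cst _).
  by rewrite mul0r => HH; exact: HH.
apply: ooU; apply/cvgr0Pnorm_le => e e0.
have [J HJ] := near_oo_P _ ((cvgr0Pnorm_le _).1 Ht e e0).
apply: P_near_oo; exists (K + J)%N => k Hk.
have KK : (K <= k.+1)%N by apply: leq_trans (leq_addr _ _) (leqW Hk).
have E : (K + (k.+1 - K))%N = k.+1 by rewrite subnKC.
rewrite ger0_norm ?EE0 // -E; apply: le_trans (Hgeo _) _.
apply: le_trans (ler_norm _) _; apply: HJ.
by rewrite leq_subRL // (leq_trans Hk) // addnS.
Qed.

Lemma gle0 : (exists K, forall k, (K <= k)%N -> EE k.+1 <= tau * EE k) ->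
  forall j, gg j xbar <= 0.
Proof.
move=> HK j; rewrite -oppr_ge0.
apply: (@lim_nonneg_of_min R nat U _ (fun k => - gg j (x k.+1))
   (fun k => lam k.+1 j) (fun k => EE k.+1)).
- have HC1 := contU (gg j) (cont_of_C1 (gg j) (Hgg j)).
  have HC2 := cvgN' U _ _ _ HC1.
  exact: HC2.
- exact: caseA_cvg.
- by apply: filterE => k; rewrite /EE; exact: comp_le_enorm.
Qed.

Lemma concl_A : (forall j, gg j xbar <= 0) ->
  exists w : 'I_p -> R,
    (forall i, blk i = nu ->
       pd (sqplus gg) xbar i + \sum_(j < p) w j * pd (hh j) xbar i = 0)
    /\ (forall j, Num.min (- hh j xbar) (w j) = 0).
Proof.
move=> Hg; exists (fun _ => 0); split.
- move=> i Hi; rewrite pd_sqplus; last by move=> j; exact: (Hgg j).1.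
  rewrite [X in _ + X]big1 => [|j _]; last by rewrite mul0r.
  rewrite big1 ?addr0 // => j _.
  have := Hg j; case: (leP 0 (gg j xbar)) => H1 H2.
    have E : gg j xbar = 0 by apply/eqP; rewrite eq_le H1 H2.
    by rewrite E mulr0 mul0r.
  by rewrite mulr0 mul0r.
- move=> j; rewrite min_r //; rewrite oppr_ge0; exact: hle0.
Qed.

Lemma rho_unbounded :
  (forall K, exists k, (K <= k)%N /\ ~ (EE k.+1 <= tau * EE k)) ->
  forall M, \forall k \near \oo, M < rho k.
Proof.
move=> Hf.
have step : forall m0, exists K, forall k, (K <= k)%N -> gam ^+ m0 * rho 0 <= rho k.
  elim=> [|m0 [K HK]].
    by exists 0%N => k _; rewrite expr0 mul1r; apply: rmono'.
  have [k0 [Hk0 Hn]] := Hf K.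
  exists k0.+1 => k Hk.
  have E : rho k0.+1 = gam * rho k0.
    rewrite Hrho; case: ifP => // H; exfalso; apply: Hn; exact: H.
  apply: le_trans (rmono' _ _ Hk); rewrite E exprS -mulrA.
  apply: ler_wpM2l; first by apply: ltW; apply: lt_trans Hgam.
  exact: HK.
move=> M; have [m0 Hm] := pow_unbounded R gam (rho 0) M Hgam Hrho0.
have [K HK] := step m0.
apply: P_near_oo; exists K => k Hk; exact: lt_le_trans Hm (HK k Hk).
Qed.


Lemma caseB : (forall M, \forall k \near \oo, M < rho k) ->
  exists w : 'I_p -> R,
    (forall i, blk i = nu ->
       pd (sqplus gg) xbar i + \sum_(j < p) w j * pd (hh j) xbar i = 0)
    /\ (forall j, Num.min (- hh j xbar) (w j) = 0).
Proof.
move=> Hr.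
have HrU : forall M, U (fun k => M < rho k) by move=> M; apply: Hoo.
have rinv : (fun k => (rho k)^-1) @ U --> 0 by exact: (inv_cvg0 R nat U _ rho HrU).
have U1 : U (fun k => (1 <= k)%N) by apply: Hoo; apply: P_near_oo; exists 1%N.
have Dth : forall i, (fun k => pd th (x k.+1) i) @ U --> pd th xbar i.
  by move=> i; exact: (contU (fun z => pd th z i) (Hth.2 i)).
have Dg : forall j i, (fun k => pd (gg j) (x k.+1) i) @ U --> pd (gg j) xbar i.
  by move=> j i; exact: (contU (fun z => pd (gg j) z i) ((Hgg j).2 i)).
have Dh : forall j i, (fun k => pd (hh j) (x k.+1) i) @ U --> pd (hh j) xbar i.
  by move=> j i; exact: (contU (fun z => pd (hh j) z i) ((Hhh j).2 i)).
have gy : forall j, (fun k => gg j (x k.+1)) @ U --> gg j xbar.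
  by move=> j; exact: (contU (gg j) (cont_of_C1 (gg j) (Hgg j))).
have hy : forall j, (fun k => hh j (x k.+1)) @ U --> hh j xbar.
  by move=> j; exact: (contU (hh j) (cont_of_C1 (hh j) (Hhh j))).
have e'U : eps' @ U --> 0 by exact: ooU.
have urho : forall j, (fun k => u k j / rho k) @ U --> 0.
  move=> j; apply: (@cvg0_le R nat U _ _ (fun k => umax j * (rho k)^-1)).
    apply: filterS U1 => k k1.
    rewrite normrM normfV (gtr0_norm (rpos k)).
    apply: ler_wpM2r; first by rewrite invr_ge0 ltW // rpos.
    by case: k k1 => // k _; exact: ubnd.
  have HH := @cvgMl_tmp _ _ U UF (fun k => (rho k)^-1) (umax j) 0 rinv.
  exact: (cvg_lim_eq U _ _ _ HH (mulr0 _)).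
have acvg : forall j, (fun k => Num.max 0 (gg j (x k.+1) + u k j / rho k)) @ U -->
                      Num.max 0 (gg j xbar).
  move=> j; have HH0 := cvgD' U UF _ _ _ _ (gy j) (urho j).
  have HH := cvg_lim_eq U _ _ _ HH0 (addr0 _).
  exact: (cvg_max0 R nat U UF (fun k => gg j (x k.+1) + u k j / rho k) (gg j xbar) HH).
pose c i := \sum_(j < m) Num.max 0 (gg j xbar) * pd (gg j) xbar i.
have Ssum : forall i, (fun k => \sum_(j < m)
     Num.max 0 (gg j (x k.+1) + u k j / rho k) * pd (gg j) (x k.+1) i) @ U --> c i.
  move=> i; apply: (@cvg_sumR R nat U _ m
    (fun j k => Num.max 0 (gg j (x k.+1) + u k j / rho k) * pd (gg j) (x k.+1) i)) => j.
  exact: (cvgM' U UF _ _ _ _ (acvg j) (Dg j i)).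
pose G k i := pd (La th gg (u k) (rho k)) (x k.+1) i
    + \sum_(j < p) mu k.+1 j * pd (hh j) (x k.+1) i.
have Grho : forall i, blk i = nu -> (fun k => G k i / rho k) @ U --> 0.
  move=> i Hi; apply: (@cvg0_le R nat U _ _ (fun k => B * (rho k)^-1)).
    apply: filterE => k.
    rewrite normrM normfV (gtr0_norm (rpos k)).
    apply: ler_wpM2r; first by rewrite invr_ge0 ltW // rpos.
    exact: le_trans (Hgrad k i Hi) (HB k).
  have HH := @cvgMl_tmp _ _ U UF (fun k => (rho k)^-1) B 0 rinv.
  exact: (cvg_lim_eq U _ _ _ HH (mulr0 _)).
have Dthr : forall i, (fun k => pd th (x k.+1) i / rho k) @ U --> 0.
  move=> i.
  have HH : (fun k => pd th (x k.+1) i * (rho k)^-1) @ U --> pd th xbar i * 0 :=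
    cvgM' U UF (fun k => pd th (x k.+1) i) (fun k => (rho k)^-1) _ _ (Dth i) rinv.
  exact: (cvg_lim_eq U _ _ _ HH (mulr0 _)).
pose beta k j := mu k.+1 j / rho k.
have Hbeta : forall i, blk i = nu ->
  (fun k => \sum_(j < p) beta k j * pd (hh j) (x k.+1) i) @ U --> - c i.
  move=> i Hi.
  apply: (cvg_eqU R nat U _ _ (fun k => G k i / rho k - pd th (x k.+1) i / rho k -
     \sum_(j < m) Num.max 0 (gg j (x k.+1) + u k j / rho k) * pd (gg j) (x k.+1) i)).
    apply: filterE => k; rewrite /G pd_La;
      [ | exact: (Hth.1 (x k.+1)) | by move=> j; exact: ((Hgg j).1 (x k.+1))].
    have r0 : rho k != 0 by rewrite gt_eqF // rpos.
    rewrite (eq_bigr (fun j => mu k.+1 j * pd (hh j) (x k.+1) i / rho k)); last first.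
      by move=> j _; rewrite /beta mulrAC.
    rewrite -mulr_suml.
    by field.
  have HH : (fun k => G k i / rho k - pd th (x k.+1) i / rho k -
     \sum_(j < m) Num.max 0 (gg j (x k.+1) + u k j / rho k) * pd (gg j) (x k.+1) i)
     @ U --> 0 - 0 - c i :=
   cvgB' U UF _ _ _ _ (cvgB' U UF (fun k => G k i / rho k)
      (fun k => pd th (x k.+1) i / rho k) _ _ (Grho i Hi) (Dthr i)) (Ssum i).
  apply: (cvg_lim_eq U _ _ _ HH); by rewrite subr0 sub0r.
pose S : {set 'I_p} := finset (fun j => hh j xbar == 0).
pose b k j := if j \in S then Num.max 0 (beta k j) else 0.
have Hdiff : forall j, (fun k => beta k j - b k j) @ U --> 0.
  move=> j; apply: (@cvg0_le R nat U _ _ eps'); last exact: e'U.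
  case: (boolP (j \in S)) => jS.
  - apply: filterS (HrU 1) => k r1.
    have e0 := eps'0 k.
    have Hm : - eps' k <= mu k.+1 j.
      have := Hcompl k j; rewrite ler_norml => /andP [H _]; apply: le_trans H _.
      by rewrite ge_min lexx orbT.
    rewrite /b jS.
    case: (leP 0 (beta k j)) => hb.
      by rewrite subrr normr0.
    rewrite subr0 ltr0_norm // /beta -mulNr ler_pdivrMr ?rpos //.
    nra.
  - have hneg : hh j xbar < 0.
      by rewrite lt_neqAle hle0 andbT; move: jS; rewrite /S finset.in_set.
    have d0 : 0 < - hh j xbar / 2 by rewrite divr_gt0 // oppr_gt0.
    have H1 : U (fun k => `|hh j xbar - hh j (x k.+1)| < - hh j xbar / 2).
      exact: (@cvgr_dist_lt _ _ _ U UF _ _ (hy j) _ d0).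
    have H2 : U (fun k => `|0 - eps' k| < - hh j xbar / 2).
      exact: (@cvgr_dist_lt _ _ _ U UF _ _ e'U _ d0).
    apply: filterS (filterI (filterI H1 H2) (HrU 1)) => k [[h1 h2] r1].
    have e0 := eps'0 k.
    rewrite /b (negbTE jS) subr0.
    have Hc := Hcompl k j.
    move: h2; rewrite sub0r normrN => h2.
    have n1 := ler_norm (hh j (x k.+1) - hh j xbar); rewrite distrC in n1.
    have n2 := ler_norm (eps' k).
    move: Hc; case: (leP (- hh j (x k.+1)) (mu k.+1 j)) => hm Hc.
      have n3 := ler_norm (- hh j (x k.+1)).
      exfalso; lra.
    rewrite /beta normrM normfV (gtr0_norm (rpos k)) ler_pdivrMr ?rpos //.
    nra.
have Hd : forall i, blk i = nu ->
    (fun k => \sum_(j < p) b k j * pd (hh j) (x k.+1) i) @ U --> - c i.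
  move=> i Hi.
  apply: (cvg_eqU R nat U _ _ (fun k => \sum_(j < p) beta k j * pd (hh j) (x k.+1) i
      - \sum_(j < p) (beta k j - b k j) * pd (hh j) (x k.+1) i)).
    by apply: filterE => k; rewrite -sumrB; apply: eq_bigr => j _; ring.
  have HH1 : (fun k => \sum_(j < p) (beta k j - b k j) * pd (hh j) (x k.+1) i)
      @ U --> \sum_(j < p) 0 * pd (hh j) xbar i.
    apply: (@cvg_sumR R nat U _ p
      (fun j k => (beta k j - b k j) * pd (hh j) (x k.+1) i)) => j.
    exact: (cvgM' U UF (fun k => beta k j - b k j) (fun k => pd (hh j) (x k.+1) i)
              _ _ (Hdiff j) (Dh j i)).
  have HH2 : (fun k => \sum_(j < p) beta k j * pd (hh j) (x k.+1) i
      - \sum_(j < p) (beta k j - b k j) * pd (hh j) (x k.+1) i)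
      @ U --> - c i - \sum_(j < p) 0 * pd (hh j) xbar i :=
    cvgB' U UF _ _ _ _ (Hbeta i Hi) HH1.
  apply: (cvg_lim_eq U _ _ _ HH2).
  by rewrite big1 ?subr0 // => j _; rewrite mul0r.
have Hb : Hyps R p U S b.
  apply: filterE => k; split => j; rewrite /b.
    by case: ifP => _ //; rewrite le_max lexx.
  by move=> jS; rewrite (negbTE jS).
have hS : forall j, j \in S -> hh j xbar = 0.
  by move=> j; rewrite /S finset.in_set => /eqP.
have hcont : forall j i, continuous (fun z => pd (hh j) z i).
  by move=> j i; exact: (Hhh j).2.
have [w' [w0 [wS wD]]] := cone R n N blk nu p hh xbar HCPLD hcont U UU
    (fun k => x k.+1) Hy #|S| S b (fun i => - c i) (leqnn _) hS Hb Hd.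
exists (fun j => 2 * w' j); split.
- move=> i Hi; rewrite pd_sqplus; last by move=> j; exact: ((Hgg j).1 xbar).
  have E1 := wD i Hi.
  rewrite (eq_bigr (fun j => 2 * (w' j * pd (hh j) xbar i))); last first.
    by move=> j _; rewrite mulrA.
  rewrite -mulr_sumr E1.
  rewrite (eq_bigr (fun j => 2 * (Num.max 0 (gg j xbar) * pd (gg j) xbar i))); last first.
    by move=> j _; rewrite mulrA.
  by rewrite -mulr_sumr /c mulrN subrr.
- move=> j; case: (boolP (j \in S)) => jS.
    have E : hh j xbar = 0 by move: jS; rewrite /S finset.in_set => /eqP.
    by rewrite E oppr0 min_l // mulr_ge0.
  by rewrite wS // mulr0 min_r // oppr_ge0 hle0.
Qed.

Lemma main_nu : exists w : 'I_p -> R,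
    (forall i, blk i = nu ->
       pd (sqplus gg) xbar i + \sum_(j < p) w j * pd (hh j) xbar i = 0)
    /\ (forall j, Num.min (- hh j xbar) (w j) = 0).
Proof.
have [HK|Hn] := pselect (exists K, forall k, (K <= k)%N -> EE k.+1 <= tau * EE k).
  exact: concl_A (gle0 HK).
apply: caseB; apply: rho_unbounded => K.
apply: contrapT => HK'; apply: Hn; exists K => k Hk.
apply: contrapT => Hc; apply: HK'; exists k; split => //.
Qed.

End Main.

Theorem corollary4p2
  (R : realType) (n N : nat) (blk : 'I_n -> 'I_N) (m p : 'I_N -> nat)
  (theta : 'I_N -> 'rV[R]_n -> R)
  (g : forall nu : 'I_N, 'I_(m nu) -> 'rV[R]_n -> R)
  (h : forall nu : 'I_N, 'I_(p nu) -> 'rV[R]_n -> R)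
  (Htheta : forall nu, C1 (theta nu))
  (Hg : forall nu j, C1 (g nu j))
  (Hh : forall nu j, C1 (h nu j))
  (tau gamma : 'I_N -> R) (umax : forall nu : 'I_N, 'I_(m nu) -> R)
  (Htau : forall nu, 0 < tau nu < 1)
  (Hgamma : forall nu, 1 < gamma nu)
  (Humax : forall nu j, 0 <= umax nu j)
  (x : nat -> 'rV[R]_n)
  (lam u : nat -> forall nu : 'I_N, 'I_(m nu) -> R)
  (mu : nat -> forall nu : 'I_N, 'I_(p nu) -> R)
  (rho : nat -> 'I_N -> R)
  (Hrho0 : forall nu, 0 < rho 0%N nu)
  (eps eps' : nat -> R)
  (Heps_nonneg : forall k, 0 <= eps k)
  (Heps_bnd : exists B : R, forall k, eps k <= B)
  (Heps'_cvg : eps' @ \oo --> (0 : R))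
  (* step (1): inexactness assumption *)
  (Hinex_grad : forall k nu,
     bnorm blk nu (fun i =>
        pd (La (theta nu) (g nu) (u k nu) (rho k nu)) (x k.+1) i
        + \sum_(j < p nu) mu k.+1 nu j * pd (h nu j) (x k.+1) i) <= eps k)
  (Hinex_compl : forall k nu,
     enorm (fun j : 'I_(p nu) => Num.min (- h nu j (x k.+1)) (mu k.+1 nu j))
       <= eps' k)
  (* step (2): multiplier update *)
  (Hlam : forall k nu j,
     lam k.+1 nu j = Num.max 0 (u k nu j + rho k nu * g nu j (x k.+1)))
  (* step (3): penalty update *)
  (Hrho : forall k nu,
     rho k.+1 nu =
       if enorm (fun j : 'I_(m nu) => Num.min (- g nu j (x k.+1)) (lam k.+1 nu j))
            <= tau nu * enorm (fun j : 'I_(m nu) => Num.min (- g nu j (x k)) (lam k nu j))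
       then rho k nu else gamma nu * rho k nu)
  (* step (4): safeguarded multiplier update *)
  (Hu : forall k nu j, u k.+1 nu j = Num.min (lam k.+1 nu j) (umax nu j))
  (xbar : 'rV[R]_n)
  (Hlimpt : exists phi : nat -> nat,
     (forall a b, (a < b)%N -> (phi a < phi b)%N) /\
     (fun k => x (phi k)) @ \oo --> xbar)
  (HCPLD : forall nu, CPLD blk nu (h nu) xbar) :
  forall nu : 'I_N, exists w : 'I_(p nu) -> R,
    (forall i, blk i = nu ->
       pd (sqplus (g nu)) xbar i + \sum_(j < p nu) w j * pd (h nu j) xbar i = 0)
    /\ (forall j, Num.min (- h nu j xbar) (w j) = 0).
Proof.
move=> nu.
have [B HB] := Heps_bnd.
have [phi [Hphi Hcv]] := Hlimpt.
have phik : forall k, (k <= phi k)%N.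
  elim=> [|k IH] //; exact: leq_ltn_trans IH (Hphi _ _ (ltnSn k)).
pose F0 := (fun k => (phi k.+1).-1) @ (\oo : set_system nat).
have F0P : ProperFilter F0 by exact: fmap_proper_filter.
have [U [UU sFU]] := ultraFilterLemma F0P.
have Hoo : forall P : nat -> Prop, (\forall k \near \oo, P k) -> U P.
  move=> P HP; apply: sFU.
  have [N0 HN] := near_oo_P _ HP.
  apply: P_near_oo; exists N0 => k Hk; apply: HN.
  have H := phik k.+1.
  by apply: leq_trans Hk _; rewrite -ltnS (ltn_predK H).
have Hy : (fun k => x k.+1) @ U --> xbar.
  move=> A HA; apply: sFU.
  have [N0 HN] := near_oo_P _ (Hcv A HA).
  apply: P_near_oo; exists N0 => k Hk.
  have H := phik k.+1.
  rewrite /= (ltn_predK H).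
  exact: HN (leq_trans Hk (leqnSn _)).
have Hgrad' : forall k i, blk i = nu ->
  `|pd (La (theta nu) (g nu) (u k nu) (rho k nu)) (x k.+1) i
    + \sum_(j < p nu) mu k.+1 nu j * pd (h nu j) (x k.+1) i| <= eps k.
  by move=> k i Hi; exact: le_trans (comp_le_bnorm _ Hi) (Hinex_grad k nu).
exact: (main_nu R n N blk nu (m nu) (p nu) (theta nu) (g nu) (h nu)
  (Htheta nu) (Hg nu) (Hh nu) (tau nu) (gamma nu) (umax nu) (Htau nu)
  (Hgamma nu) (Humax nu) x (fun k => lam k nu) (fun k => u k nu)
  (fun k => mu k nu) (fun k => rho k nu) (Hrho0 nu) eps eps' B HB Heps'_cvg
  Hgrad' (fun k => Hinex_compl k nu) (fun k => Hlam k nu) (fun k => Hrho k nu)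
  (fun k => Hu k nu) xbar U UU Hoo Hy (HCPLD nu)).
Qed.
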